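(* Let $V\le\mathbb{F}_2^n$ be a linear subspace of dimension $r$, $d=n-r$, $\mathbf{s}_0\in\mathbb{F}_2^n$, and let $\rho$ be an $n$-qubit state whose syndrome distribution is $p_\rho=p_{\mathbf{s}_0,V}$, where $p_{\mathbf{s}_0,V}(\mathbf{s})=2^{-r}\mathbf{1}[\mathbf{s}\in\mathbf{s}_0+V]$. Consider the adaptive certification procedure with threshold $\varepsilon=0$: gauges $A_1,A_2,\dots\in\mathrm{GL}(n,2)$ are queried, $A_k$ with columns $\mathbf{a}_{k,1},\dots,\mathbf{a}_{k,n}$; after round $k$ one forms $Q_k=\{\mathbf{a}_{j,i}:j\le k,\ i\le n\}$, $\mathcal{F}_k=\{p\in\Delta(\mathbb{F}_2^n):\widehat p(\mathbf{u})=\mu_\rho(\mathbf{u})\ \forall\mathbf{u}\in Q_k\}$, $L_k=\min_{p\in\mathcal{F}_k}p(\mathbf{0})$, $U_k=\max_{p\in\mathcal{F}_k}p(\mathbf{0})$, and the procedure stops at the first $k$ with $U_k-L_k\le\varepsilon$, returning $[L_k,U_k]$. Suppose that by some round $t$ the queried label set $Q_t$ contains a basis of $V^\perp=\{\mathbf{u}:\mathbf{u}\cdot\mathbf{v}=0\ \forall\mathbf{v}\in V\}$ and, in the case $\mathbf{s}_0\in V$, also contains one representative of every nonzero coset of $\mathbb{F}_2^n/V^\perp$. Then the procedure terminates by round $t$ and returns the exact value $$F(\rho,\psi)=p_\rho(\mathbf{0})=\begin{cases}2^{-r},&\mathbf{s}_0\in V,\\ 0,&\mathbf{s}_0\notin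 V.\end{cases}$$ Thus the number of such structurally relevant stabilizer labels is $d$ if $\mathbf{s}_0\notin V$, and at most $d+2^r-1$ if $\mathbf{s}_0\in V$.
   Context: Setting: $|\psi\rangle$ is an $n$-qubit stabilizer state whose stabilizer group is generated by independent commuting Pauli operators $g_1,\dots,g_n$; $g(\mathbf{u})=\prod_j g_j^{u_j}$ for $\mathbf{u}\in\mathbb{F}_2^n$. Syndrome projectors $\Pi_{\mathbf{s}}=2^{-n}\prod_j(I+(-1)^{s_j}g_j)$ are orthogonal rank-one projectors summing to identity with $\Pi_{\mathbf{0}}=|\psi\rangle\langle\psi|$. The syndrome distribution is $p_\rho(\mathbf{s})=\mathrm{tr}(\rho\Pi_{\mathbf{s}})$, so $F(\rho,\psi)=\langle\psi|\rho|\psi\rangle=p_\rho(\mathbf{0})$; $\mu_\rho(\mathbf{u})=\mathrm{tr}(\rho g(\mathbf{u}))=\widehat{p_\rho}(\mathbf{u})$ with Walsh transform $\widehat p(\mathbf{u})=\sum_{\mathbf{s}}(-1)^{\mathbf{u}\cdot\mathbf{s}}p(\mathbf{s})$ and $\mathbf{u}\cdot\mathbf{s}$ the mod-2 inner product. $\Delta(\mathbb{F}_2^n)$ is the set of probability distributions on $\mathbb{F}_2^n$; $\mathrm{GL}(n,2)$ the invertible binary $n\times n$ matrices. The claim does not depend on how the gauges are chosen. *)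

(* Defs.v *)
From HB Require Import structures.
From mathcomp Require Import all_boot all_order all_algebra.
From mathcomp Require Import classical_sets reals.
Set Implicit Arguments. Unset Strict Implicit. Unset Printing Implicit Defensive.
Import Order.TTheory GRing.Theory Num.Theory.
Local Open Scope ring_scope.

Definition dotF2 (n : nat) (u v : 'rV['F_2]_n) : 'F_2 := (u *m v^T) 0 0.

Definition walsh (R : realType) (n : nat) (p : {ffun 'rV['F_2]_n -> R})
  (u : 'rV['F_2]_n) : R :=
  \sum_(s : 'rV['F_2]_n) (if dotF2 u s == 0 then 1 else -1) * p s.

Definition perp_set (n : nat) (V : {vspace 'rV['F_2]_n}) : {set 'rV['F_2]_n} :=
  [set u | [forall v, (v \in V) ==> (dotF2 u v == 0)]].

Definition perp_space (n : nat) (V : {vspace 'rV['F_2]_n}) : {vspace 'rV['F_2]_n} :=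
  <<enum (perp_set V)>>%VS.

Definition pcoset (R : realType) (n : nat) (s0 : 'rV['F_2]_n)
  (V : {vspace 'rV['F_2]_n}) : {ffun 'rV['F_2]_n -> R} :=
  [ffun s => if s - s0 \in V then (2 ^+ \dim V)^-1 else 0].

(* Q_k: all columns a_{j,i} of the gauges A_1, ..., A_k (rounds start at 1) *)
Definition labels (n : nat) (A : nat -> 'M['F_2]_n) (k : nat) : {set 'rV['F_2]_n} :=
  [set u | [exists j : 'I_k.+1, [exists i : 'I_n,
             (0 < (j : nat))%N && (u == (col i (A j))^T)]]].

Definition is_distr (R : realType) (n : nat) (p : {ffun 'rV['F_2]_n -> R}) : Prop :=
  (forall s, 0 <= p s) /\ \sum_s p s = 1.

Definition feasible (R : realType) (n : nat) (A : nat -> 'M['F_2]_n)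
  (mu : 'rV['F_2]_n -> R) (k : nat) : set {ffun 'rV['F_2]_n -> R} :=
  [set p | is_distr p /\ forall u, u \in labels A k -> walsh p u = mu u].

Definition Lk (R : realType) (n : nat) (A : nat -> 'M['F_2]_n)
  (mu : 'rV['F_2]_n -> R) (k : nat) : R :=
  inf [set p 0 | p in feasible A mu k].
Definition Uk (R : realType) (n : nat) (A : nat -> 'M['F_2]_n)
  (mu : 'rV['F_2]_n -> R) (k : nat) : R :=
  sup [set p 0 | p in feasible A mu k].

Definition stops (R : realType) (n : nat) (A : nat -> 'M['F_2]_n)
  (mu : 'rV['F_2]_n -> R) (eps : R) (k : nat) : Prop :=
  Uk A mu k - Lk A mu k <= eps.

Definition nonzero_cosets (n : nat) (V : {vspace 'rV['F_2]_n}) : {set {set 'rV['F_2]_n}} :=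
  [set [set u + w | w in perp_set V] | u : 'rV['F_2]_n] :\ perp_set V.

(* Main.v *)
From Pilot Require Import Defs .
From HB Require Import structures.
From mathcomp Require Import all_boot all_order all_algebra all_field.
From mathcomp Require Import boolp classical_sets reals zify lra.
Import Order.TTheory GRing.Theory Num.Theory.
Local Open Scope ring_scope.
Set Implicit Arguments. Unset Strict Implicit. Unset Printing Implicit Defensive.


Lemma F2_cases (x : 'F_2) : x = 0 \/ x = 1.
Proof. by case: x => [[|[|k]]] //= Hk; [left|right]; apply: val_inj. Qed.

Section Dot.
Variable n : nat.
Implicit Types u v w : 'rV['F_2]_n.

Lemma dotE u v : dotF2 u v = \sum_i u 0 i * v 0 i.
Proof. by rewrite /dotF2 !mxE; apply: eq_bigr => i _; rewrite mxE. Qed.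

Lemma dotC u v : dotF2 u v = dotF2 v u.
Proof. by rewrite !dotE; apply: eq_bigr => i _; rewrite mulrC. Qed.

Lemma dotDl u v w : dotF2 (u + v) w = dotF2 u w + dotF2 v w.
Proof. by rewrite !dotE -big_split; apply: eq_bigr => i _; rewrite mxE mulrDl. Qed.

Lemma dotDr u v w : dotF2 u (v + w) = dotF2 u v + dotF2 u w.
Proof. by rewrite dotC dotDl !(dotC u). Qed.

Lemma dotNl u v : dotF2 (- u) v = - dotF2 u v.
Proof. by rewrite !dotE -sumrN; apply: eq_bigr => i _; rewrite mxE mulNr. Qed.

Lemma dotBl u v w : dotF2 (u - v) w = dotF2 u w - dotF2 v w.
Proof. by rewrite dotDl dotNl. Qed.

Lemma dotZr u (a : 'F_2) v : dotF2 u (a *: v) = a * dotF2 u v.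
Proof. by rewrite !dotE mulr_sumr; apply: eq_bigr => i _; rewrite mxE mulrCA. Qed.

Lemma dot0r u : dotF2 u 0 = 0.
Proof. by rewrite dotE big1 // => i _; rewrite mxE mulr0. Qed.

Lemma dot_sumr u (I : finType) (F : I -> 'rV['F_2]_n) :
  dotF2 u (\sum_i F i) = \sum_i dotF2 u (F i).
Proof.
symmetry; apply: (big_ind2 (fun a b => a = dotF2 u b)) => //.
- by rewrite dot0r.
- by move=> a1 b1 a2 b2 -> ->; rewrite dotDr.
Qed.
End Dot.

Section Perp.
Variable n : nat.
Variable U : {vspace 'rV['F_2]_n}.

Definition Bm : 'M['F_2]_(\dim U, n) := \matrix_(i < \dim U) (vbasis U)`_i.
Definition PM : 'M['F_2]_(n, \dim U) := Bm^T.

Lemma PM_entry u i : (u *m PM) 0 i = dotF2 u (vbasis U)`_i.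
Proof.
rewrite dotE !mxE; apply: eq_bigr => j _; rewrite !mxE //.
Qed.

Lemma perp_setP u : (u \in perp_set U) = (u *m PM == 0).
Proof.
rewrite inE; apply/forallP/eqP => [H | H v].
  apply/rowP => i; rewrite PM_entry mxE; apply/eqP.
  have := H (vbasis U)`_i; rewrite vbasis_mem ?mem_nth ?size_tuple //.
apply/implyP => vU; rewrite (coord_vbasis vU) dot_sumr big1 // => i _.
by rewrite dotZr -PM_entry H mxE mulr0.
Qed.

Lemma Bm_free : row_free Bm.
Proof.
apply: inj_row_free => y Hy.
have /freeP fr := basis_free (vbasisP U).
have := fr (fun i => y 0 i).
rewrite mulmx_sum_row in Hy.
under eq_bigr => i _ do rewrite -[(vbasis U)`_i](rowK (fun i => (vbasis U)`_i)).
move=> /(_ Hy) H0; apply/rowP => i; rewrite H0 mxE //.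
Qed.

Lemma PM_surj (y : 'rV['F_2]_(\dim U)) : exists u : 'rV['F_2]_n, u *m PM = y.
Proof.
have : row_full PM by rewrite /row_full mxrank_tr; exact: Bm_free.
case/row_fullP => C HC; exists (y *m C); by rewrite -mulmxA HC mulmx1.
Qed.

Definition pf : 'Hom('rV['F_2]_n, 'rV['F_2]_(\dim U)) := linfun (@mulmxr _ 1 _ _ PM).

Lemma perp_spaceE : perp_space U = lker pf.
Proof.
apply/vspaceP => x; apply/idP/idP => Hx.
  move: x Hx; apply/subvP/span_subvP => x; rewrite mem_enum perp_setP.
  by rewrite memv_ker lfunE.
by apply: memv_span; rewrite mem_enum perp_setP -[_ *m _](lfunE (@mulmxr _ 1 _ _ PM)) -memv_ker.
Qed.

Lemma mem_perp_space u : (u \in perp_space U) = (u \in perp_set U).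
Proof. by rewrite perp_spaceE memv_ker lfunE perp_setP. Qed.

Lemma dim_perp : \dim (perp_space U) = (n - \dim U)%N.
Proof.
have H := limg_ker_dim pf fullv.
rewrite capfv -perp_spaceE dimvf dim_matrix in H.
have E : (pf @: fullv)%VS = fullv.
  apply/eqP; rewrite eqEsubv subvf /=; apply/subvP => y _.
  have [u <-] := PM_surj y.
  by rewrite -[_ *m _](lfunE (@mulmxr _ 1 _ _ PM)) memv_img ?memvf.
rewrite E dimvf dim_matrix in H. rewrite !mul1r in H.
have Hle : (\dim U <= n)%N by apply: leq_trans (leq_addl (\dim (perp_space U)) _) _; rewrite H.
apply/eqP; rewrite -(eqn_add2r (\dim U)) subnK //; exact/eqP.
Qed.

Lemma card_perp : #|perp_set U| = (2 ^ (n - \dim U))%N.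
Proof.
rewrite -dim_perp.
transitivity #|perp_space U|; first by apply: eq_card => x; rewrite mem_perp_space.
by rewrite card_vspace card_Fp.
Qed.

Definition Gf (y : 'rV['F_2]_(\dim U)) : {set 'rV['F_2]_n} := [set x | x *m PM == y].

Lemma coset_Gf u : [set u + w | w in perp_set U] = Gf (u *m PM).
Proof.
apply/setP => x; rewrite inE; apply/imsetP/eqP => [[w Hw ->] | H].
  by move: Hw; rewrite perp_setP mulmxDl => /eqP ->; rewrite addr0.
exists (x - u); first by rewrite perp_setP mulmxBl H subrr.
by rewrite addrC subrK.
Qed.

Lemma card_cosets : #|nonzero_cosets U| = (2 ^ \dim U - 1)%N.
Proof.
have E1 : [set [set u + w | w in perp_set U] | u : 'rV['F_2]_n] = Gf @: [set: 'rV['F_2]_(\dim U)]%SET.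
  apply/setP => S; apply/imsetP/imsetP => [[u _ ->] | [y _ ->]].
    by exists (u *m PM); rewrite ?inE // coset_Gf.
  by have [u <-] := PM_surj y; exists u; rewrite ?inE // coset_Gf.
have E2 : perp_set U = Gf 0.
  by apply/setP => x; rewrite perp_setP inE.
have Ginj : injective Gf.
  move=> y1 y2 H; have [u Hu] := PM_surj y1.
  have : u \in Gf y1 by rewrite inE Hu.
  by rewrite H inE Hu => /eqP.
rewrite /nonzero_cosets E1 E2.
have := cardsD1 (Gf 0) (Gf @: [set: 'rV['F_2]_(\dim U)]%SET).
rewrite imset_f ?inE // card_imset // cardsT card_mx card_Fp // mul1n add1n => ->.
by rewrite subn1.
Qed.

Lemma dimU_le : (\dim U <= n)%N.
Proof. by have := dimvS (subvf U); rewrite dimvf dim_matrix mul1r. Qed.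

End Perp.

Lemma perpperp n (U : {vspace 'rV['F_2]_n}) x : (forall w, w \in perp_set U -> dotF2 w x = 0) -> x \in U.
Proof.
move=> Hx.
have sub : [pred v in U] \subset perp_set (perp_space U).
  apply/fintype.subsetP => v vU; rewrite inE; apply/forallP => w; apply/implyP.
  rewrite mem_perp_space inE => /forallP /(_ v); rewrite vU /= dotC //.
have ecard : #|[pred v in U]| = #|perp_set (perp_space U)|.
  rewrite card_perp dim_perp subKn ?(dimU_le U) //.
  by rewrite card_vspace card_Fp.
have := subset_cardP ecard sub => /(_ x).
rewrite inE => ->; rewrite inE; apply/forallP => w; apply/implyP.
by rewrite mem_perp_space dotC => /Hx ->.
Qed.

Section Real.
Variable R : realType.
Definition sg (x : 'F_2) : R := if x == 0 then 1 else -1.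

Lemma sgD x y : sg (x + y) = sg x * sg y.
Proof.
by case: (F2_cases x) => ->; case: (F2_cases y) => ->; rewrite /sg /=; 
  rewrite ?mul1r ?mulr1 ?mulrNN ?mulr1 //.
Qed.

Lemma sg1 : sg 1 = -1. Proof. by []. Qed.
Lemma sg0 : sg 0 = 1. Proof. by []. Qed.

Lemma charsum n (U : {vspace 'rV['F_2]_n}) (u : 'rV['F_2]_n) :
  \sum_(v in U) sg (dotF2 u v) = if u \in perp_set U then (#|U|%:R : R) else 0.
Proof.
case: ifP => Hu.
  rewrite inE in Hu; move/forallP: Hu => Hu.
  under eq_bigr => v vU do rewrite (eqP (implyP (Hu v) vU)) sg0.
  by rewrite sumr_const.
have [v0 v0U Hv0] : exists2 v0, v0 \in U & dotF2 u v0 = 1.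
  move/negbT: Hu; rewrite inE negb_forall => /existsP [v0].
  rewrite negb_imply => /andP [v0U Hv]; exists v0 => //.
  by case: (F2_cases (dotF2 u v0)) Hv => E; rewrite E // eqxx.
have HS : \sum_(v in U) sg (dotF2 u v) = - \sum_(v in U) sg (dotF2 u v).
  rewrite {1}(reindex_inj (addIr v0)) /= -sumrN.
  apply: eq_big => v; first by rewrite rpredDr.
  by move=> _; rewrite dotDr Hv0 sgD sg1 mulrN1.
lra.
Qed.

Lemma sg_sq x : sg x * sg x = 1.
Proof. by case: (F2_cases x) => ->; rewrite /sg /= ?mulr1 ?mulrNN ?mulr1. Qed.

Lemma sg_neq x y : x != y -> sg x * sg y = -1.
Proof.
by case: (F2_cases x) => ->; case: (F2_cases y) => ->; rewrite ?eqxx //= => _;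
  rewrite /sg /= ?mul1r ?mulr1.
Qed.

Lemma sg_prod_le1 x y : sg x * sg y <= 1.
Proof.
by case: (F2_cases x) => ->; case: (F2_cases y) => ->; rewrite /sg /= ?mul1r ?mulr1 ?mulrNN ?mulr1 //; lra.
Qed.

Lemma dot0l n (v : 'rV['F_2]_n) : dotF2 0 v = 0.
Proof. by rewrite dotC dot0r. Qed.

Lemma walsh_pcoset n (s0 : 'rV['F_2]_n) (V : {vspace 'rV['F_2]_n}) u :
  walsh (pcoset R s0 V) u = if u \in perp_set V then sg (dotF2 u s0) else 0.
Proof.
rewrite /walsh.
transitivity (\sum_(s | s - s0 \in V) sg (dotF2 u s) * (2 ^+ \dim V)^-1).
  rewrite [RHS]big_mkcond; apply: eq_bigr => s _; rewrite ffunE.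
  by rewrite /sg; case: (_ \in V); rewrite ?mulr0.
rewrite (reindex_inj (addIr s0)) /=.
under eq_bigl => v do rewrite addrK.
under eq_bigr => v _ do rewrite dotDr sgD.
rewrite -big_distrl -big_distrl /= charsum.
case: ifP => _; last by rewrite !mul0r.
rewrite card_vspace card_Fp // natrX mulrC mulrA mulVf ?mul1r //.
by rewrite expf_neq0 // pnatr_eq0.
Qed.

Lemma sum_walsh0 n (p : {ffun 'rV['F_2]_n -> R}) : walsh p 0 = \sum_s p s.
Proof. by apply: eq_bigr => s _; rewrite dot0l eqxx mul1r. Qed.

Lemma pcoset_distr n (s0 : 'rV['F_2]_n) (V : {vspace 'rV['F_2]_n}) :
  is_distr (pcoset R s0 V).
Proof.
split.
  move=> s; rewrite ffunE; case: ifP => _ //.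
  by rewrite invr_ge0 exprn_ge0.
rewrite -sum_walsh0 walsh_pcoset.
have -> : (0 : 'rV['F_2]_n) \in perp_set V.
  by rewrite inE; apply/forallP => v; rewrite dot0l eqxx implybT.
by rewrite dot0l.
Qed.

Lemma supp n (p : {ffun 'rV['F_2]_n -> R}) b s0 :
  is_distr p -> walsh p b = sg (dotF2 b s0) ->
  forall s, dotF2 b s != dotF2 b s0 -> p s = 0.
Proof.
move=> [p0 p1] Hw.
have H : \sum_s (1 - sg (dotF2 b s0) * sg (dotF2 b s)) * p s = 0.
  under eq_bigr => s _ do rewrite mulrBl mul1r -mulrA.
  by rewrite sumrB p1 -mulr_sumr; rewrite /walsh in Hw; rewrite Hw sg_sq subrr.
move=> s Hs.
have := psumr_eq0P _ H.
have Hnn : forall i, true -> 0 <= (1 - sg (dotF2 b s0) * sg (dotF2 b i)) * p i.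
  by move=> i _; apply: mulr_ge0 => //; rewrite subr_ge0 sg_prod_le1.
move=> /(_ Hnn s isT); rewrite sg_neq 1?eq_sym //.
move=> H2; have : 2 * p s = 0 by rewrite -H2; lra.
lra.
Qed.

Lemma perp_full0 n (s : 'rV['F_2]_n) : (s \in perp_set fullv) = (s == 0).
Proof.
apply/idP/eqP => [Hs | ->]; last first.
  by rewrite inE; apply/forallP => v; rewrite dot0l eqxx implybT.
apply/rowP => i; rewrite mxE.
move: Hs; rewrite inE => /forallP /(_ (delta_mx 0 i)); rewrite memvf /=.
rewrite /dotF2 trmx_delta -colE mxE => /eqP //.
Qed.

Lemma fourier0 n (p : {ffun 'rV['F_2]_n -> R}) :
  \sum_u walsh p u = (2 ^ n)%:R * p 0.
Proof.
rewrite /walsh exchange_big /=.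
under eq_bigr => s _ do rewrite -big_distrl /=.
have E : forall s : 'rV['F_2]_n, \sum_u sg (dotF2 u s) = if s == 0 then (2 ^ n)%:R else 0.
  move=> s; transitivity (\sum_(u in (fullv : {vspace 'rV['F_2]_n})) sg (dotF2 s u)).
    by apply: eq_big => [u|u _]; rewrite ?memvf // dotC.
  rewrite charsum perp_full0; case: ifP => // _.
  by rewrite card_vspace card_Fp // dimvf dim_matrix mul1r.
under eq_bigr => s _ do rewrite E.
rewrite (bigD1 0) //= eqxx big1 ?addr0 // => s /negbTE ->; by rewrite mul0r.
Qed.
End Real.

Lemma dot_eq0_mx n (w x : 'rV['F_2]_n) : (w *m x^T == 0) = (dotF2 w x == 0).
Proof.
rewrite /dotF2; apply/eqP/eqP => [-> | H]; first by rewrite mxE.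
by apply/rowP => i; rewrite ord1 H mxE.
Qed.

Lemma span_dot n (B : seq 'rV['F_2]_n) x :
  (forall b, b \in B -> dotF2 b x = 0) -> forall w, w \in <<B>>%VS -> dotF2 w x = 0.
Proof.
move=> HB w; pose K := lker (linfun (@mulmxr _ 1 _ _ x^T)).
have : (<<B>> <= K)%VS.
  apply/span_subvP => b Hb; rewrite memv_ker lfunE /= dot_eq0_mx HB //.
move/subvP => H /H; rewrite memv_ker lfunE /= dot_eq0_mx => /eqP //.
Qed.

Lemma minimal (P : nat -> Prop) m : P m ->
  exists k, [/\ (k <= m)%N, P k & forall j, (j < k)%N -> ~ P j].
Proof.
elim/ltn_ind: m => m IH Pm.
case: (pselect (exists j, (j < m)%N /\ P j)) => [[j [ljm Pj]] | Hn].
  have [k [lkj Pk Hk]] := IH j ljm Pj.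
  by exists k; split => //; apply: leq_trans lkj (ltnW ljm).
by exists m; split => // j ljm Pj; apply: Hn; exists j.
Qed.

Section Main.
Variable R : realType.

Lemma feasible_exact n (V : {vspace 'rV['F_2]_n}) (s0 : 'rV['F_2]_n)
  (A : nat -> 'M['F_2]_n) (t : nat) (B : seq 'rV['F_2]_n) :
  {subset B <= labels A t} -> basis_of (perp_space V) B ->
  (s0 \in V -> forall u, u \notin perp_set V ->
      exists2 q, q \in labels A t & q - u \in perp_set V) ->
  forall p, feasible A (walsh (pcoset R s0 V)) t p -> p 0 = pcoset R s0 V 0.
Proof.
move=> HB Hbasis Hcos p [pd Hp].
have Bperp : forall b, b \in B -> b \in perp_set V.
  move=> b Hb; rewrite -mem_perp_space -(span_basis Hbasis); exact: memv_span.
have supp1 : forall s, p s != 0 -> s - s0 \in V.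
  move=> s Hs; case: (boolP (s - s0 \in V)) => // Hn; exfalso; move/negP: Hs; apply.
  case: (boolP (all (fun b => dotF2 b (s - s0) == 0) B)) => [/allP Hall | ].
    exfalso; move/negP: Hn; apply; apply: perpperp => w Hw.
    apply: (span_dot (B := B)); last by rewrite (span_basis Hbasis) mem_perp_space.
    by move=> b /Hall /eqP.
  rewrite -has_predC => /hasP [b Hb /= Hd].
  apply/eqP; apply: (supp pd (b := b) (s0 := s0)).
    by rewrite Hp ?HB // walsh_pcoset Bperp.
  by move: Hd; rewrite dotC dotBl subr_eq0 (dotC b s) (dotC b s0).
rewrite ffunE sub0r memvN.
case: ifP => s0V; last first.
  apply/eqP; case: (boolP (p 0 == 0)) => // H; have := supp1 _ H; rewrite sub0r memvN s0V //.
have suppV : forall s, p s != 0 -> s \in V.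
  by move=> s /supp1 H; rewrite -(subrK s0 s) memvD.
have W1 : forall u, u \in perp_set V -> walsh p u = 1.
  move=> u Hu; rewrite -(proj2 pd); apply: eq_bigr => s _.
  case: (boolP (p s == 0)) => [/eqP -> | /suppV sV]; first by rewrite !mulr0.
  move: Hu; rewrite inE => /forallP /(_ s); rewrite sV /= => /eqP ->.
  by rewrite eqxx mul1r.
have W0 : forall u, u \notin perp_set V -> walsh p u = 0.
  move=> u Hu; have [q ql Hq] := Hcos s0V u Hu.
  have -> : walsh p u = walsh p q.
    apply: eq_bigr => s _.
    case: (boolP (p s == 0)) => [/eqP -> | /suppV sV]; first by rewrite !mulr0.
    have : dotF2 (q - u) s = 0.
      by move: Hq; rewrite inE => /forallP /(_ s); rewrite sV /= => /eqP.
    by rewrite dotBl => /eqP; rewrite subr_eq0 => /eqP ->.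
  rewrite Hp // walsh_pcoset.
  case: ifP => // qV; exfalso; move/negP: Hu; apply.
  move: qV Hq; rewrite !perp_setP mulmxBl => /eqP ->.
  by rewrite sub0r oppr_eq0.
have Hsum : \sum_u walsh p u = (2 ^ (n - \dim V))%:R :> R.
  rewrite (bigID (fun u => u \in perp_set V)) /= [X in _ + X]big1 ?addr0;
    last by move=> u /W0.
  rewrite (eq_bigr (fun _ => 1)); last by move=> u /W1.
  by rewrite sumr_const card_perp.
rewrite fourier0 in Hsum.
have e : (2 ^ n)%:R = (2 ^ (n - \dim V))%:R * (2 ^+ \dim V) :> R.
  by rewrite -natrX -natrM -expnD subnK // dimU_le.
have a0 : (2 ^ (n - \dim V))%:R != 0 :> R by rewrite pnatr_eq0 -lt0n expn_gt0.
have b0 : (2 ^+ \dim V) != 0 :> R by rewrite expf_neq0 // pnatr_eq0.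
rewrite e -mulrA in Hsum.
have H1 : 2 ^+ \dim V * p 0 = 1.
  by apply: (mulfI a0); rewrite Hsum mulr1.
by apply: (mulfI b0); rewrite H1 mulfV.
Qed.
End Main.
Unset Implicit Arguments.

Lemma labels_mono n (A : nat -> 'M['F_2]_n) k t : (k <= t)%N ->
  {subset labels A k <= labels A t}.
Proof.
move=> kt u; rewrite !inE => /existsP [j /existsP [i /andP [j0 Hu]]].
apply/existsP; exists (widen_ord (leq_ltn_trans kt (ltnSn t)) j).
by apply/existsP; exists i; rewrite /= j0.
Qed.

Lemma distr_le1 (R : realType) n (p : {ffun 'rV['F_2]_n -> R}) :
  is_distr p -> 0 <= p 0 <= 1.
Proof.
move=> [p0 p1]; rewrite p0 /= -p1 (bigD1 0) //= lerDl.
by apply: sumr_ge0 => i _.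
Qed.

Theorem proposition9 (R : realType) (n : nat) (V : {vspace 'rV['F_2]_n})
  (s0 : 'rV['F_2]_n) (A : nat -> 'M['F_2]_n) (t : nat) :
  (forall j, A j \in unitmx) ->
  (0 < t)%N ->
  let p_rho := pcoset R s0 V in
  let mu := walsh p_rho in
  (exists B : seq 'rV['F_2]_n,
      {subset B <= labels A t} /\ basis_of (perp_space V) B) ->
  (s0 \in V -> forall u, u \notin perp_set V ->
      exists2 q, q \in labels A t & q - u \in perp_set V) ->
  (exists k : nat,
      [/\ (0 < k <= t)%N, stops A mu 0 k,
          (forall j : nat, (0 < j < k)%N -> ~ stops A mu 0 j),
          Lk A mu k = p_rho 0 & Uk A mu k = p_rho 0]) /\
  p_rho 0 = (if s0 \in V then (2 ^+ \dim V)^-1 else 0) /\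
  (\dim (perp_space V) = (n - \dim V)%N /\
   #|nonzero_cosets V| = (2 ^ \dim V - 1)%N).
Proof.
move=> _ t0 p_rho mu [B [HB Hbasis]] Hcos.
have exact_t := @feasible_exact R n V s0 A t B HB Hbasis Hcos.
have rho_feas : forall k, feasible A mu k p_rho.
  by move=> k; split => //; exact: pcoset_distr.
have bounds : forall k, Lk A mu k <= p_rho 0 <= Uk A mu k.
  move=> k; apply/andP; split.
    apply: ge_inf; last by exists p_rho.
    by exists 0 => x [p [pd _] <-]; case/andP: (@distr_le1 R n p pd).
  apply: ub_le_sup; last by exists p_rho.
  by exists 1 => x [p [pd _] <-]; case/andP: (@distr_le1 R n p pd).
have St : image (feasible A mu t) (fun p : {ffun 'rV['F_2]_n -> R} => p 0) = classical_sets.set1 (p_rho 0).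
  apply/seteqP; split => x.
    by move=> [p Hp <-]; rewrite /= (exact_t p Hp).
  by move=> ->; exists p_rho.
have stop_t : stops A mu 0 t.
  by rewrite /stops /Lk /Uk St sup1 inf1 subrr.
have [k [kt [k0 stk] Hmin]] := minimal (P := fun k => (0 < k)%N /\ stops A mu 0 k) (conj t0 stop_t).
have /andP [Lb Ub] := bounds k.
have HLU : Lk A mu k = p_rho 0 /\ Uk A mu k = p_rho 0.
  move: stk; rewrite /stops => stk; split; lra.
split.
  exists k; split => //; first by rewrite k0.
  - by move=> j /andP [j0 jk] sj; apply: (Hmin j jk).
  - by case: HLU.
  - by case: HLU.
split; first by rewrite /p_rho ffunE sub0r memvN.
by split; [exact: dim_perp | exact: card_cosets].
Qed.
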